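(* Let $r,s,t>1$ and $M>0$ be real numbers, set $c = 4rst - 2r^2 - 2s^2 - 2t^2 + 1$ and assume $c>1$. Put $\tilde M = M\,\frac{s\sqrt{c^2-1} + (c-1)\sqrt{s^2-1}}{c-1}$. Define the following elements of $\mathrm{SL}(2,\mathbb{R})$: $$\rho = r\mathbf{1} + \frac{r(c+1)}{\sqrt{c^2-1}}\mathbf{I} - \frac{\tilde M(2rs - t + (c+\sqrt{c^2-1})t)}{2(c-1+2s^2)}(\mathbf{J}+\mathbf{K}) + \frac{2rs-t+(c-\sqrt{c^2-1})t}{2\tilde M(c-1)}(\mathbf{J}-\mathbf{K}),$$ $$\sigma = s\mathbf{1} - \frac{s(c+1)}{\sqrt{c^2-1}}\mathbf{I} + \frac{\tilde M}{2}(\mathbf{J}+\mathbf{K}) - \frac{c-1+2s^2}{2\tilde M(c-1)}(\mathbf{J}-\mathbf{K}),$$ and let $\rho'$, $\sigma'$ be obtained from $\rho$, $\sigma$ respectively by changing the signs of the coefficients of $(\mathbf{J}+\mathbf{K})$ and $(\mathbf{J}-\mathbf{K})$ (leaving the coefficients of $\mathbf{1}$ and $\mathbf{I}$ unchanged). Let $\mathcal{S}$ be the genus 2 hyperbolic surface obtained by doubling the once-punctured torus determined by $\rho,\sigma$, whose fundamental group is represented by the group generated by (the images in $\mathrm{PSL}(2,\mathbb{R})$ of) $\rho,\sigma,\rho',\sigma'$. Then the trace field of $\mathcal{S}$, i.e. $\mathbb{Q}(\{\mathrm{tr}\,\gamma\})$ where $\gamma$ ranges over the preimage in $\mathrm{SL}(2,\mathbb{R})$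 of this group, is equal to $\mathbb{Q}(r,s,t)$.
   Context: $\mathbf{1} = \begin{pmatrix}1&0\\0&1\end{pmatrix}$, $\mathbf{I} = \begin{pmatrix}1&0\\0&-1\end{pmatrix}$, $\mathbf{J} = \begin{pmatrix}0&1\\1&0\end{pmatrix}$, $\mathbf{K} = \begin{pmatrix}0&1\\-1&0\end{pmatrix}$. With these parameters $\rho,\sigma$ generate a Fuchsian group uniformizing a hyperbolic once-punctured torus $\mathcal{T}$ with $\mathrm{tr}\,\rho=2r$, $\mathrm{tr}\,\sigma=2s$, $\mathrm{tr}\,\rho\sigma=2t$, $\mathrm{tr}\,[\rho,\sigma] = -2c$; $\rho',\sigma'$ correspond to the mirror image of $\mathcal{T}$ (the Möbius map $\frac{az+b}{cz+d}$ is replaced by $\frac{az-b}{-cz+d}$), and $\mathcal{S}$ is obtained by gluing $\mathcal{T}$ and its mirror image along their common boundary. *)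

(* Defs.v *)
From HB Require Import structures.
From mathcomp Require Import all_boot all_order all_algebra.
From mathcomp Require Import reals.
Set Implicit Arguments. Unset Strict Implicit. Unset Printing Implicit Defensive.
Import Order.TTheory GRing.Theory Num.Theory.
Local Open Scope ring_scope.

Section Defs.
Variable R : realType.

Definition mk2 (a b c d : R) : 'M[R]_2 :=
  \matrix_(i < 2, j < 2)
    (if i == 0 :> nat then (if j == 0 :> nat then a else b)
     else (if j == 0 :> nat then c else d)).

Definition mat1 : 'M[R]_2 := mk2 1 0 0 1.
Definition matI : 'M[R]_2 := mk2 1 0 0 (-1).
Definition matJ : 'M[R]_2 := mk2 0 1 1 0.
Definition matK : 'M[R]_2 := mk2 0 1 (-1) 0.

Definition qmat (a b u v : R) : 'M[R]_2 :=
  a *: mat1 + b *: matI + u *: (matJ + matK) + v *: (matJ - matK).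

Definition cpar (r s t : R) : R :=
  4 * r * s * t - 2 * r ^+ 2 - 2 * s ^+ 2 - 2 * t ^+ 2 + 1.

Definition Mtilde (r s t M : R) : R :=
  let c := cpar r s t in
  M * ((s * Num.sqrt (c ^+ 2 - 1) + (c - 1) * Num.sqrt (s ^+ 2 - 1)) / (c - 1)).

Definition rho_coeffs (r s t M : R) : R * R * R * R :=
  let c := cpar r s t in
  let q := Num.sqrt (c ^+ 2 - 1) in
  let Mt := Mtilde r s t M in
  (r, r * (c + 1) / q,
   - (Mt * (2 * r * s - t + (c + q) * t) / (2 * (c - 1 + 2 * s ^+ 2))),
   (2 * r * s - t + (c - q) * t) / (2 * Mt * (c - 1))).

Definition sigma_coeffs (r s t M : R) : R * R * R * R :=
  let c := cpar r s t in
  let q := Num.sqrt (c ^+ 2 - 1) in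
  let Mt := Mtilde r s t M in
  (s, - (s * (c + 1) / q), Mt / 2, - ((c - 1 + 2 * s ^+ 2) / (2 * Mt * (c - 1)))).

Definition of_coeffs (x : R * R * R * R) : 'M[R]_2 :=
  let: (a, b, u, v) := x in qmat a b u v.
Definition of_coeffs' (x : R * R * R * R) : 'M[R]_2 :=
  let: (a, b, u, v) := x in qmat a b (- u) (- v).

Definition rho r s t M := of_coeffs (rho_coeffs r s t M).
Definition sigma r s t M := of_coeffs (sigma_coeffs r s t M).
Definition rho' r s t M := of_coeffs' (rho_coeffs r s t M).
Definition sigma' r s t M := of_coeffs' (sigma_coeffs r s t M).

Inductive gen_group (S : 'M[R]_2 -> Prop) : 'M[R]_2 -> Prop :=
  | gg_gen g : S g -> gen_group S g
  | gg_one : gen_group S 1%:M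
  | gg_mul g h : gen_group S g -> gen_group S h -> gen_group S (g *m h)
  | gg_inv g : gen_group S g -> gen_group S (invmx g).

Inductive gen_field (S : R -> Prop) : R -> Prop :=
  | gf_gen x : S x -> gen_field S x
  | gf_one : gen_field S 1
  | gf_add x y : gen_field S x -> gen_field S y -> gen_field S (x + y)
  | gf_opp x : gen_field S x -> gen_field S (- x)
  | gf_mul x y : gen_field S x -> gen_field S y -> gen_field S (x * y)
  | gf_inv x : gen_field S x -> x != 0 -> gen_field S (x^-1).

(* preimage in SL(2,R) of the group generated by the images in PSL(2,R)
   of rho, sigma, rho', sigma' : generated by these and -1 *)
Definition surface_group (r s t M : R) : 'M[R]_2 -> Prop :=
  gen_group (fun g => g = rho r s t M \/ g = sigma r s t M \/
                      g = rho' r s t M \/ g = sigma' r s t M \/ g = - 1%:M).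

Definition trace_field (r s t M : R) : R -> Prop :=
  gen_field (fun x => exists g, surface_group r s t M g /\ x = \tr g).

End Defs.

(* Main.v *)
Require Import Defs.
From HB Require Import structures.
From mathcomp Require Import all_boot all_order all_algebra.
From mathcomp Require Import reals.
From mathcomp Require Import ring lra.
Import Order.TTheory GRing.Theory Num.Theory.
Local Open Scope ring_scope.

Section H.
Variable R : realType.

Lemma mk2E (A : 'M[R]_2) : A = mk2 (A 0 0) (A 0 1) (A 1 0) (A 1 1).
Proof.
apply/matrixP => i j; rewrite !mxE.
by case: i => [[|[|i]] Hi] //; case: j => [[|[|j]] Hj] //;
 congr (A _ _); apply/val_inj.
Qed.

Lemma mk2_mul (a b c d a' b' c' d' : R) :
  mk2 a b c d *m mk2 a' b' c' d' =
  mk2 (a*a'+b*c') (a*b'+b*d') (c*a'+d*c') (c*b'+d*d').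
Proof.
apply/matrixP => i j; rewrite !mxE !big_ord_recr big_ord0 /= !mxE /= add0r.
by case: i => [[|[|i]] Hi] //; case: j => [[|[|j]] Hj].
Qed.

Lemma mk2_tr (a b c d : R) : \tr (mk2 a b c d) = a + d.
Proof. by rewrite /mxtrace !big_ord_recr big_ord0 /= !mxE /= add0r. Qed.

Lemma scal_mk2 (x : R) : x%:M = mk2 x 0 0 x.
Proof.
apply/matrixP => i j; rewrite !mxE.
by case: i => [[|[|i]] Hi] //; case: j => [[|[|j]] Hj].
Qed.

Lemma oppmk2 (a b c d : R) : - mk2 a b c d = mk2 (-a) (-b) (-c) (-d).
Proof.
apply/matrixP => i j; rewrite !mxE.
by case: i => [[|[|i]] Hi] //; case: j => [[|[|j]] Hj].
Qed.

Lemma qmatE (a b u v : R) : qmat a b u v = mk2 (a+b) (u+u) (v+v) (a-b).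
Proof.
apply/matrixP => i j; rewrite !mxE.
case: i => [[|[|i]] Hi] //; case: j => [[|[|j]] Hj] //=; ring.
Qed.


Lemma mk2_inj (a b c d a' b' c' d' : R) :
  mk2 a b c d = mk2 a' b' c' d' -> [/\ a = a', b = b', c = c' & d = d'].
Proof.
move=> E.
have := congr1 (fun A : 'M[R]_2 => A 0 0) E.
have := congr1 (fun A : 'M[R]_2 => A 0 1) E.
have := congr1 (fun A : 'M[R]_2 => A 1 0) E.
have := congr1 (fun A : 'M[R]_2 => A 1 1) E.
by rewrite /= !mxE /=.
Qed.

Section Closure.
Variable S : R -> Prop.
Local Notation F := (gen_field S).

Lemma F0 : F 0.
Proof. by rewrite -(addrN 1); apply: gf_add; [apply: gf_one| apply: gf_opp; apply: gf_one]. Qed.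
Lemma Finv x : F x -> F (x^-1).
Proof. by move=> Fx; case: (eqVneq x 0) => [->|nz]; [rewrite invr0; exact: F0 | exact: gf_inv]. Qed.
Lemma Fsub x y : F x -> F y -> F (x - y).
Proof. by move=> ? ?; apply: gf_add => //; apply: gf_opp. Qed.
Lemma Fdiv x y : F x -> F y -> F (x / y).
Proof. by move=> ? ?; apply: gf_mul => //; apply: Finv. Qed.
Lemma Fexp x n : F x -> F (x ^+ n).
Proof. move=> Fx; elim: n => [|n IH]; [exact: gf_one| rewrite exprS; exact: gf_mul]. Qed.
Lemma Fnat n : F n%:R.
Proof. elim: n => [|n IH]; [exact: F0 | rewrite -addn1 natrD; apply: gf_add => //; exact: gf_one]. Qed.

Variables q Mt E : R.
Hypothesis Fq2 : F (q ^+ 2).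
Hypothesis Fk : F (Mt * E).

Ltac fsolve := repeat first [assumption | apply: gf_add | apply: gf_mul | apply: gf_opp].

Definition Pinv (X : 'M[R]_2) := exists a b g d, [/\ F a, F b, F g, F d &
  X = mk2 (a + b*q) (Mt*(g+d*q)) (E*(-g+d*q)) (a - b*q)].

Lemma Pinv_mul X Y : Pinv X -> Pinv Y -> Pinv (X *m Y).
Proof.
move=> [a [b [g [d [Fa Fb Fg Fd ->]]]]] [a' [b' [g' [d' [Fa' Fb' Fg' Fd' ->]]]]].
rewrite mk2_mul.
exists (a*a' + b*b'*q^+2 + Mt*E*(d*d'*q^+2 - g*g')),
  (a*b' + b*a' + Mt*E*(g*d' - d*g')),
  (a*g' + g*a' + q^+2*(b*d' - d*b')),
  (a*d' + d*a' + b*g' - g*b'); split; [fsolve|fsolve|fsolve|fsolve|].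
- by congr mk2; ring.
Qed.

Lemma Pinv_inv X : Pinv X -> Pinv (invmx X).
Proof.
move=> HX; case Hu: (X \in unitmx); last by rewrite invmx_out ?inE ?Hu.
move: HX => [a [b [g [d [Fa Fb Fg Fd EX]]]]].
set N := a^+2 - b^+2*q^+2 + Mt*E*(g^+2 - d^+2*q^+2).
have Hadj : X *m mk2 (a - b*q) (- (Mt*(g+d*q))) (- (E*(-g+d*q))) (a + b*q) = N%:M.
  by rewrite EX mk2_mul scal_mk2 /N; congr mk2; ring.
have Hinv C : X *m C = 1%:M -> invmx X = C.
  by move=> HC; rewrite -[invmx X]mulmx1 -HC mulmxA mulVmx // mul1mx.
case: (eqVneq N 0) => [N0|Nn0].
  exfalso.
  move: Hadj; rewrite N0 scal_mk2 => H0.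
  have := congr1 (mulmx (invmx X)) H0.
  rewrite mulmxA mulVmx // mul1mx [invmx X]mk2E mk2_mul !mulr0 !addr0 => /mk2_inj [h1 h2 h3 h4].
  have X0 : X = 0.
    apply/matrixP => i j; rewrite EX !mxE.
    case: i => [[|[|i]] Hi] //=; case: j => [[|[|j]] Hj] //=;
    first [exact: h1 | exact: h4 | (apply/eqP; rewrite -oppr_eq0; apply/eqP; assumption)].
  move: (mulmxV Hu); rewrite X0 mul0mx scal_mk2 /= => /esym.
  rewrite -scal_mk2 => H1.
  have := congr1 (fun A : 'M[R]_2 => A 0 0) H1.
  by rewrite !mxE /= => /eqP; rewrite oner_eq0.
exists (a / N), (- b / N), (- g / N), (- d / N); split; try (by apply: Fdiv => //; fsolve).

apply: Hinv; rewrite EX mk2_mul scal_mk2; move: Nn0; rewrite /N => Nn0; congr mk2; field; by rewrite !exprMn.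
Qed.
End Closure.
End H.

Ltac fsolve2 := repeat first [assumption | apply: gf_add | apply: gf_mul | apply: gf_opp
  | apply: Finv | apply: Fexp | apply: Fnat | apply: gf_one].

Lemma gen_field_mono (R : realType) (S T : R -> Prop) x :
  (forall y, S y -> gen_field T y) -> gen_field S x -> gen_field T x.
Proof.
move=> H; elim => [y Sy||y z _ Hy _ Hz|y _ Hy|y z _ Hy _ Hz|y _ Hy nz].
- exact: H.
- exact: gf_one.
- exact: gf_add.
- exact: gf_opp.
- exact: gf_mul.
- exact: gf_inv.
Qed.

Lemma tr_form (R : realType) (a b g d a' b' g' d' q Mt E : R) :
  \tr (mk2 (a+b*q) (Mt*(g+d*q)) (E*(-g+d*q)) (a-b*q) *m
       mk2 (a'+b'*q) (Mt*(g'+d'*q)) (E*(-g'+d'*q)) (a'-b'*q)) =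
  2 * (a*a' + b*b'*q^+2 + Mt*E*(d*d'*q^+2 - g*g')).
Proof. by rewrite mk2_mul mk2_tr; ring. Qed.

Lemma two_nz (R : realType) : (1 + 1 : R) != 0.
Proof. by rewrite gt_eqF //; lra. Qed.

Theorem theorem2p3 (R : realType) (r s t M : R) :
  1 < r -> 1 < s -> 1 < t -> 0 < M -> 1 < cpar r s t ->
  forall x : R,
    trace_field r s t M x <-> gen_field (fun y => y = r \/ y = s \/ y = t) x.
Proof.
move=> hr hs ht hM hc x.
set F := gen_field (fun y => y = r \/ y = s \/ y = t).
have Fr : F r by apply: gf_gen; left.
have Fs : F s by apply: gf_gen; right; left.
have Ft : F t by apply: gf_gen; right; right.
set c := cpar r s t.
have Fc : F c by rewrite /c /cpar; fsolve2.
set q := Num.sqrt (c ^+ 2 - 1).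
set Mt := Mtilde r s t M.
have W0 : 0 < c - 1 by rewrite subr_gt0.
have hq2 : 0 < c ^+ 2 - 1 by rewrite expr2; nra.
have q0 : 0 < q by rewrite sqrtr_gt0.
have hq : q ^+ 2 = c ^+ 2 - 1 by rewrite sqr_sqrtr // ltW.
have D0 : 0 < c - 1 + 2 * s ^+ 2 by rewrite expr2; nra.
have Mt0 : 0 < Mt.
  rewrite /Mt /Mtilde -/c -/q; apply: mulr_gt0 => //; apply: divr_gt0 => //.
  have : 0 < s * q by apply: mulr_gt0 => //; lra.
  have : 0 <= (c - 1) * Num.sqrt (s ^+ 2 - 1) by apply: mulr_ge0; [lra | exact: sqrtr_ge0].
  lra.
have qn : q != 0 by rewrite gt_eqF.
have Wn : c - 1 != 0 by rewrite gt_eqF.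
have Dn : c - 1 + 2 * s ^+ 2 != 0 by rewrite gt_eqF.
have Mtn : Mt != 0 by rewrite gt_eqF.
have cn : c + 1 != 0 by rewrite gt_eqF //; lra.
have n2 : (2 : R) != 0 by rewrite pnatr_eq0.
set E := (c - 1 + 2 * s ^+ 2) / (Mt * (c - 1)).
set A := 2 * r * s - t + c * t.
have Fq2 : F (q ^+ 2) by rewrite hq; fsolve2.
have Fk : F (Mt * E).
  have -> : Mt * E = (c - 1 + 2 * s ^+ 2) / (c - 1) by rewrite /E; field; rewrite Mtn Wn.
  by apply: Fdiv; fsolve2.
set br := r * (c+1) / q^+2.
set bs := - (s * (c+1) / q^+2).
set gr := - A / (c - 1 + 2 * s ^+ 2).
set dr := - t / (c - 1 + 2 * s ^+ 2).
have hrho : rho r s t M = mk2 (r + br * q) (Mt * (gr + dr * q))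
   (E * (- gr + dr * q)) (r - br * q).
  rewrite /rho /of_coeffs /rho_coeffs /= -/c -/q -/Mt qmatE.
  rewrite /br /gr /dr /E /A; clearbody c q Mt; congr mk2; field; by rewrite ?qn ?Dn ?Wn ?Mtn.
have hrho' : rho' r s t M = mk2 (r + br * q) (Mt * (-gr + -dr * q))
   (E * (- -gr + -dr * q)) (r - br * q).
  rewrite /rho' /of_coeffs' /rho_coeffs /= -/c -/q -/Mt qmatE.
  rewrite /br /gr /dr /E /A; clearbody c q Mt; congr mk2; field; by rewrite ?qn ?Dn ?Wn ?Mtn.
have hsigma : sigma r s t M = mk2 (s + bs * q) (Mt * (1 + 0 * q))
   (E * (- 1 + 0 * q)) (s - bs * q).
  rewrite /sigma /of_coeffs /sigma_coeffs /= -/c -/q -/Mt qmatE.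
  rewrite /E /bs; clearbody c q Mt; congr mk2; field; by rewrite ?qn ?Dn ?Wn ?Mtn.
have hsigma' : sigma' r s t M = mk2 (s + bs * q) (Mt * (-1 + -0 * q))
   (E * (- -1 + -0 * q)) (s - bs * q).
  rewrite /sigma' /of_coeffs' /sigma_coeffs /= -/c -/q -/Mt qmatE.
  rewrite /E /bs; clearbody c q Mt; congr mk2; field; by rewrite ?qn ?Dn ?Wn ?Mtn.
have Fbr : F br by rewrite /br; fsolve2.
have Fbs : F bs by rewrite /bs; fsolve2.
have Fgr : F gr by rewrite /gr /A; fsolve2.
have Fdr : F dr by rewrite /dr; fsolve2.
have Pg : forall g, surface_group r s t M g -> @Pinv R (fun y : R => y = r \/ y = s \/ y = t) q Mt E g.
  move=> g; elim => [h [->|[->|[->|[->|->]]]] | | h k _ Hh _ Hk | h _ Hh].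
  - by exists r, br, gr, dr; split.
  - by exists s, bs, 1, 0; split => //; [exact: gf_one | exact: F0].
  - by exists r, br, (-gr), (-dr); split => //; fsolve2.
  - by exists s, bs, (-1), (-0); split => //; fsolve2; exact: F0.
  - exists (-1), 0, 0, 0; split; try (fsolve2; exact: F0).
    by rewrite scal_mk2 oppmk2; congr mk2; ring.
  - exists 1, 0, 0, 0; split; try (fsolve2; exact: F0).
    by rewrite scal_mk2; congr mk2; ring.
  - exact: Pinv_mul.
  - exact: Pinv_inv.
split.
- elim => [y [g [Hg ->]]||y z _ Hy _ Hz|y _ Hy|y z _ Hy _ Hz|y _ Hy nz].
  + have [a [b [g' [d [Fa _ _ _ ->]]]]] := Pg g Hg.
    rewrite mk2_tr (_ : a + b * q + (a - b * q) = a + a); last by ring.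
    exact: gf_add.
  + exact: gf_one.
  + exact: gf_add.
  + exact: gf_opp.
  + exact: gf_mul.
  + exact: gf_inv.
- apply: gen_field_mono => y Hy.
  have T2 : trace_field r s t M (1 + 1) by apply: gf_add; apply: gf_one.
  have T2i : trace_field r s t M ((1 + 1)^-1).
    by apply: gf_inv => //; exact: two_nz.
  have Ttr g : surface_group r s t M g -> trace_field r s t M (\tr g).
    by move=> Hg; apply: gf_gen; exists g.
  have Sgen g : (g = rho r s t M \/ g = sigma r s t M) -> surface_group r s t M g.
    by move=> [->|->]; apply: gg_gen; [left | right; left].
  case: Hy => [->|[->|->]].
  + have er : \tr (rho r s t M) * (1 + 1)^-1 = r.
      by rewrite hrho mk2_tr; field.
    suff H : trace_field r s t M (\tr (rho r s t M) * (1 + 1)^-1) by rewrite er in H.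
    apply: gf_mul => //; apply: Ttr; apply: Sgen; by left.
  + have er : \tr (sigma r s t M) * (1 + 1)^-1 = s.
      by rewrite hsigma mk2_tr; field.
    suff H : trace_field r s t M (\tr (sigma r s t M) * (1 + 1)^-1) by rewrite er in H.
    apply: gf_mul => //; apply: Ttr; apply: Sgen; by right.
  + have er : \tr (rho r s t M *m sigma r s t M) * (1 + 1)^-1 = t.
      rewrite hrho hsigma tr_form /br /bs /gr /dr /A hq.
      have cn2 : c ^+ 2 - 1 != 0 by rewrite gt_eqF.
      rewrite /E; clearbody c q Mt; field.
      by rewrite ?cn2 ?Dn ?Wn ?Mtn ?cn ?n2 ?two_nz.
    suff H : trace_field r s t M (\tr (rho r s t M *m sigma r s t M) * (1 + 1)^-1) by rewrite er in H.
    apply: gf_mul => //; apply: Ttr; apply: gg_mul; apply: Sgen; [left|right] => //.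
Qed.
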